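(* Let $\Bbbk$ be a field, $n\ge3$, $q\in\Bbbk$ a root of unity such that $q^2$ has order $n$ (and $q\ne q^{-1}$). Consider $K=\Bbbk\mathbb{Z}_n$ and the Hopf algebras $H=\Bbbk[x]/(x^n)$ and $H^*=\Bbbk[x^*]/((x^* )^n)$ in $K\text{-}\mathbf{Mod}$ as in the context, with the nondegenerate Hopf pairing $\langle\,,\rangle\colon H^*\otimes H\to\Bbbk$ determined by $\langle x^*,x\rangle=\frac{1}{q-q^{-1}}$. Then the braided Drinfeld double $\mathrm{Drin}_K(H^*,H)$ is generated by a group-like element $g$, a $(g^{-1},1)$-skew primitive element $x$ and a $(g^{-1},1)$-skew primitive element $x^*$, subject to the relations $$g^n=1,\quad x^n=(x^* )^n=0,\quad gx=q^{-2}xg,\quad gx^*=q^2x^*g,\quad x^*x-q^2xx^*=\frac{1}{q-q^{-1}}(1-g^{-2}).$$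
   Context: $K=\Bbbk\mathbb{Z}_n$, $\mathbb{Z}_n=\langle g\mid g^n=1\rangle$, quasi-triangular with $\mathcal{R}=R^{(1)}\otimes R^{(2)}=\frac1n\sum_{i,j=0}^{n-1}q^{-2ij}g^i\otimes g^j$ and inverse $\mathcal{R}^{-1}=R^{(-1)}\otimes R^{(-2)}=\frac1n\sum_{i,j}q^{-2ij}g^{-i}\otimes g^j$. $H=\Bbbk[x]/(x^n)$ is a Hopf algebra in $K\text{-}\mathbf{Mod}$ (braiding $v\otimes w\mapsto R^{(2)}w\otimes R^{(1)}v$) with $g\cdot x=q^{-2}x$, $x$ primitive, $\Delta(x^m)=\sum_i\binom{m}{i}_{q^2}x^i\otimes x^{m-i}$; $H^*=\Bbbk[x^*]/((x^* )^n)$ is the analogous Hopf algebra in $K\text{-}\mathbf{Mod}$ with $x^*$ primitive and $g\cdot x^*=q^2x^*$. Sumless Sweedler notation $\Delta(b)=b_{(1)}\otimes b_{(2)}$ is used. Given a Hopf algebra $H$ in $K\text{-}\mathbf{Mod}$, a Hopf algebra $H^*$ in $K\text{-}\mathbf{Mod}$ and a nondegenerate Hopf algebra pairing $\langle\,,\rangle\colon H^*\otimes H\to\Bbbk$, the braided Drinfeld double $\mathrm{Drin}_K(H^*,H)$ is the $\Bbbk$-Hopf algebra on $H^*\otimes K\otimes H$ containing $H^*,K,H$ as subalgebras, with, for $b\in H$, $c\in H^*$, $d\in K$: $db=(d_{(1)}\cdot b)d_{(2)}$, $dc=(d_{(1)}\cdot c)d_{(2)}$, and $(R^{(-1)}\cdot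 b_{(2)})(R^{(-2)}\cdot c_{(1)})\langle c_{(2)},b_{(1)}\rangle=R^{(-1)}c_{(2)}b_{(1)}R^{(2)}\langle R^{(-2)}\cdot c_{(1)},R^{(1)}\cdot b_{(2)}\rangle$ (with independent copies of $\mathcal{R}$, $\mathcal{R}^{-1}$ in each term); coproduct $\Delta(d)=d_{(1)}\otimes d_{(2)}$, $\Delta(b)=b_{(1)}R^{(2)}\otimes(R^{(1)}\cdot b_{(2)})$, $\Delta(c)=R^{(-1)}c_{(2)}\otimes(R^{(-2)}\cdot c_{(1)})$; counit extended multiplicatively; antipode $S(d)=S_K(d)$, $S(b)=S_K(R^{(2)})(R^{(1)}\cdot S_H(b))$, $S(c)=S_K(R^{(-1)})(R^{(-2)}\cdot S^{-1}_{H^*}(c))$. An element $z$ is $(a,1)$-skew primitive if $\Delta(z)=a\otimes z+z\otimes1$. *)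

(* Defs.v *)
From HB Require Import structures.
From mathcomp Require Import all_boot all_order all_algebra all_field.
Set Implicit Arguments. Unset Strict Implicit. Unset Printing Implicit Defensive.
Import GRing.Theory.
Local Open Scope ring_scope.

Fixpoint qbinom (k : nzRingType) (r : k) (m i : nat) : k :=
  match m, i with
  | _, 0 => 1
  | 0, _.+1 => 0
  | m'.+1, i'.+1 => qbinom r m' i' + r ^+ i'.+1 * qbinom r m' i'.+1
  end.

(* Elements of K = k Z_n are written g^e (e : nat, read mod n); g^{-s} = g^(n-s).
   Action of g^e on x^a in H (g.x = q^- 2 x):        (q^- 2)^(e a).
   Action of g^e on (x^* )^a in H^* (g.x^* = q^2 x^* ): (q^2)^(e a).
   R  = 1/n sum_{u,v} q^{-2uv} g^u (x) g^v,
   R^-1 = 1/n sum_{s,t} q^{-2st} g^{-s} (x) g^t.                              *)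
Definition actH (k : fieldType) (q : k) (e a : nat) : k := (q ^- 2) ^+ (e * a).
Definition actHs (k : fieldType) (q : k) (e a : nat) : k := (q ^+ 2) ^+ (e * a).
Definition Rcoef (k : fieldType) (n : nat) (q : k) (s t : nat) : k :=
  n%:R^-1 * (q ^- 2) ^+ (s * t).

(* Hopf algebra pairing <,> : H^* (x) H -> k, given by its values
   P l m = < (x^* )^l , x^m > on the monomial bases (0 <= l, m < n). *)
Definition hopf_pairing (k : fieldType) (n : nat) (q : k) (P : nat -> nat -> k) : Prop :=
  ((* <1, b> = eps(b) and <c, 1> = eps(c) *)
      forall m, (m < n)%N -> P 0%N m = (m == 0%N)%:R) /\
  [/\ (forall l, (l < n)%N -> P l 0%N = (l == 0%N)%:R),
      (* <c c', b> = <c, b_(1)> <c', b_(2)> *)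
      (forall l l' m, (l < n)%N -> (l' < n)%N -> (m < n)%N ->
         (if (l + l' < n)%N then P (l + l') m else 0) =
         \sum_(i < m.+1) qbinom (q ^+ 2) m i * P l i * P l' (m - i)%N),
      (* <c, b b'> = <c_(1), b> <c_(2), b'> *)
      (forall l m m', (l < n)%N -> (m < n)%N -> (m' < n)%N ->
         (if (m + m' < n)%N then P l (m + m') else 0) =
         \sum_(j < l.+1) qbinom (q ^+ 2) l j * P j m * P (l - j)%N m'),
      (* morphism in K-Mod: <g.c, g.b> = <c, b> *)
      (forall l m, (l < n)%N -> (m < n)%N -> actHs q 1 l * actH q 1 m * P l m = P l m)
    &
      \det (\matrix_(i < n, j < n) P i j) != 0]%R.

(* The PBW family (x^* )^a g^b x^c, i.e. the image of the basis of H^* (x) K (x) H. *)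
Definition pbw (k : fieldType) (n : nat) (A : falgType k) (G X Xs : A) : seq A :=
  [seq Xs ^+ t.1.1 * G ^+ t.1.2 * X ^+ t.2 | t : 'I_n * 'I_n * 'I_n].

(* The cross relation of Drin_K(H^*,H) for b = x^m, c = (x^* )^l, with
   Delta(x^m) = sum_i binom(m,i)_{q^2} x^i (x) x^(m-i) and likewise for x^* :
   (R^(-1).b_(2)) (R^(-2).c_(1)) <c_(2), b_(1)>
     = R^(-1) c_(2) b_(1) R^(2) <R^(-2).c_(1), R^(1).b_(2)>.              *)
Definition cross_lhs (k : fieldType) (n : nat) (q : k) (P : nat -> nat -> k)
  (A : falgType k) (X Xs : A) (l m : nat) : A :=
  \sum_(i < m.+1) \sum_(j < l.+1)
    (qbinom (q ^+ 2) m i * qbinom (q ^+ 2) l j * P (l - j)%N i) *: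
    \sum_(s < n) \sum_(t < n)
      Rcoef n q s t *:
        ((actH q (n - s) (m - i) *: X ^+ (m - i)) * (actHs q t j *: Xs ^+ j)).

Definition cross_rhs (k : fieldType) (n : nat) (q : k) (P : nat -> nat -> k)
  (A : falgType k) (G X Xs : A) (l m : nat) : A :=
  \sum_(i < m.+1) \sum_(j < l.+1)
    (qbinom (q ^+ 2) m i * qbinom (q ^+ 2) l j) *:
    \sum_(s < n) \sum_(t < n) \sum_(u < n) \sum_(v < n)
      (Rcoef n q s t * Rcoef n q u v *
         (actHs q t j * actH q u (m - i) * P j (m - i)%N)) *:
        (G ^+ (n - s) * Xs ^+ (l - j) * X ^+ i * G ^+ v).

(* A (with the elements G = g, X = x, Xs = x^* ) is the braided Drinfeld double
   Drin_K(H^*,H) for the pairing P, as an algebra: H^* = k[x^*]/((x^* )^n),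
   K = k Z_n, H = k[x]/(x^n) sit inside A as subalgebras, multiplication
   H^* (x) K (x) H -> A is a linear isomorphism, and the defining
   commutation relations hold. *)
Definition braided_double (k : fieldType) (n : nat) (q : k) (P : nat -> nat -> k)
  (A : falgType k) (G X Xs : A) : Prop :=
  [/\ G ^+ n = 1, X ^+ n = 0 & Xs ^+ n = 0] /\
  [/\ basis_of fullv (pbw n G X Xs),
      (* d b = (d_(1).b) d_(2) *)
      (forall e m, (e < n)%N -> (m < n)%N ->
         G ^+ e * X ^+ m = actH q e m *: (X ^+ m * G ^+ e)),
      (* d c = (d_(1).c) d_(2) *)
      (forall e l, (e < n)%N -> (l < n)%N ->
         G ^+ e * Xs ^+ l = actHs q e l *: (Xs ^+ l * G ^+ e))
    & (forall l m, (l < n)%N -> (m < n)%N ->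
         cross_lhs n q P X Xs l m = cross_rhs n q P G X Xs l m)].

(* A (x) A, identified with square matrices via the coordinates in a basis of A. *)
Definition tens (k : fieldType) (A : falgType k) (a b : A) : 'M[k]_(\dim (fullv : {vspace A})) :=
  \matrix_(i, j) (coord (vbasis fullv) i a * coord (vbasis fullv) j b).

(* Coproduct of the double on H:  Delta(b) = b_(1) R^(2) (x) (R^(1).b_(2)), b = x^m. *)
Definition delta_H (k : fieldType) (n : nat) (q : k) (A : falgType k) (G X : A) (m : nat) :=
  \sum_(i < m.+1) qbinom (q ^+ 2) m i *:
    \sum_(u < n) \sum_(v < n)
      Rcoef n q u v *: tens (X ^+ i * G ^+ v) (actH q u (m - i) *: X ^+ (m - i)).

(* Coproduct of the double on H^*: Delta(c) = R^(-1) c_(2) (x) (R^(-2).c_(1)), c = (x^* )^l. *)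
Definition delta_Hs (k : fieldType) (n : nat) (q : k) (A : falgType k) (G Xs : A) (l : nat) :=
  \sum_(j < l.+1) qbinom (q ^+ 2) l j *:
    \sum_(s < n) \sum_(t < n)
      Rcoef n q s t *: tens (G ^+ (n - s) * Xs ^+ (l - j)) (actHs q t j *: Xs ^+ j).

(* The relations of the presentation (g^{-2} written g^(n-2), valid as g^n = 1). *)
Definition drin_relations (k : fieldType) (n : nat) (q : k) (B : algType k) (g x xs : B) : Prop :=
  [/\ g ^+ n = 1, x ^+ n = 0 & xs ^+ n = 0] /\
  [/\ g * x = q ^- 2 *: (x * g),
      g * xs = q ^+ 2 *: (xs * g)
    & xs * x - q ^+ 2 *: (x * xs) = (q - q^-1)^-1 *: (1 - g ^+ (n - 2))].

(* A is generated by g, x, xs subject exactly to the relations above: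
   universal property of the presented algebra. *)
Definition presented_by (k : fieldType) (n : nat) (q : k) (A : falgType k) (G X Xs : A) : Prop :=
  forall (B : algType k) (g x xs : B), drin_relations n q g x xs ->
    (exists f : {lrmorphism A -> B}, [/\ f G = g, f X = x & f Xs = xs]) /\
    (forall f1 f2 : {lrmorphism A -> B},
        f1 G = f2 G -> f1 X = f2 X -> f1 Xs = f2 Xs -> f1 =1 f2).

(* Main.v *)
Require Import Defs.
From HB Require Import structures.
From mathcomp Require Import all_boot all_order all_algebra all_field zify ring.
Import GRing.Theory.
Set Implicit Arguments. Unset Strict Implicit. Unset Printing Implicit Defensive.
Local Open Scope ring_scope.

Lemma geo_sum (k : fieldType) (n : nat) (w : k) : w ^+ n = 1 ->
  \sum_(t < n) w ^+ t = if w == 1 then n%:R else 0.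
Proof.
move=> wn; case: eqP => [->|/eqP w1].
  by rewrite (eq_bigr (fun _ => 1)) ?sumr_const ?card_ord // => i _; rewrite expr1n.
have := subrX1 w n; rewrite wn subrr => /esym/eqP; rewrite mulf_eq0 subr_eq0 (negbTE w1) /=.
by move/eqP.
Qed.

Lemma ortho (k : fieldType) (n : nat) (r : k) (a b : nat) : n.-primitive_root r ->
  \sum_(t < n) (r ^+ a / r ^+ b) ^+ t = if (a == b %[mod n])%N then n%:R else 0.
Proof.
move=> pr; have r0 : r != 0 by rewrite (prim_root_eq0 pr) -lt0n (prim_order_gt0 pr).
rewrite geo_sum.
  have rb : r ^+ b != 0 by rewrite expf_neq0.
  have -> : (r ^+ a / r ^+ b == 1) = (r ^+ a == r ^+ b).
    by apply/eqP/eqP => [h|->]; [rewrite -(divfK rb (r ^+ a)) h mul1r | rewrite divff].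
  by rewrite (eq_prim_root_expr pr).
by rewrite exprMn exprVn -!exprM !(mulnC _ n) !exprM (prim_expr_order pr) !expr1n invr1 mulr1.
Qed.

Section Sums.
Variables (k : fieldType) (n : nat) (q : k).
Hypothesis pr : n.-primitive_root (q ^+ 2).
Let r := q ^+ 2.
Lemma r0 : r != 0.
Proof. by rewrite (prim_root_eq0 pr) -lt0n (prim_order_gt0 pr). Qed.
Lemma nN : n%:R != 0 :> k.
Proof. exact: prim_root_natf_neq0 pr. Qed.



Lemma powE (x : k) (j s t : nat) : (x ^+ j / x ^+ s) ^+ t = (x ^-1) ^+ (s * t) * x ^+ (t * j).
Proof. by rewrite exprMn !exprVn -!exprM mulrC (mulnC j t). Qed.

Lemma ortho_n (a b : nat) :
  n%:R^-1 * \sum_(t < n) (r ^+ a / r ^+ b) ^+ t = (a == b %[mod n])%:R.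
Proof.
rewrite ortho //; case: ifP => _; last by rewrite mulr0.
by rewrite mulVf // nN.
Qed.

Lemma sumR_s (s j : nat) : (s < n)%N -> (j < n)%N ->
  \sum_(t < n) Rcoef n q s t * actHs q t j = (s == j)%:R.
Proof.
move=> sn jn; rewrite -(modn_small sn) -(modn_small jn) eq_sym -ortho_n mulr_sumr.
apply: eq_bigr => t _; rewrite /Rcoef /actHs -mulrA; congr (_ * _).
by rewrite !modn_small // powE.
Qed.

Lemma sumR_s0 (s : nat) : (s < n)%N -> \sum_(t < n) Rcoef n q s t = (s == 0%N)%:R.
Proof.
move=> sn; rewrite -(@sumR_s s 0 sn (prim_order_gt0 pr)); apply: eq_bigr => t _.
by rewrite /actHs muln0 expr0 mulr1.
Qed.

Lemma sumR_u (v e : nat) :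
  \sum_(u < n) Rcoef n q u v * actH q u e = (0%N == v + e %[mod n])%:R.
Proof.
rewrite -ortho_n mulr_sumr.
apply: eq_bigr => t _; rewrite /Rcoef /actH -mulrA; congr (_ * _).
by rewrite powE muln0 expr0 mulr1 -exprD -mulnDr mulnC.
Qed.

Lemma sumR_u0 (v : nat) : \sum_(u < n) Rcoef n q u v = (0%N == v %[mod n])%:R.
Proof.
rewrite -(addn0 v) -(sumR_u v 0); apply: eq_bigr => t _.
by rewrite /actH muln0 expr0 mulr1 addn0.
Qed.
End Sums.

Lemma ind1 (v n : nat) : (v < n)%N -> (0 == v + 1 %[mod n])%N = (v == n.-1)%N.
Proof.
move=> vn; rewrite mod0n.
have [h|h] : (v.+1 < n)%N \/ (v.+1 = n)%N by lia.
- rewrite addn1 modn_small //; apply/idP/idP => /eqP; lia.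
- rewrite addn1 h modnn eqxx; symmetry; apply/eqP; lia.
Qed.

Lemma ind0 (v n : nat) : (v < n)%N -> (0 == v + 0 %[mod n])%N = (v == 0)%N.
Proof. by move=> vn; rewrite addn0 mod0n modn_small // eq_sym. Qed.

Lemma pick (k : fieldType) (V : lmodType k) (n j : nat) (F : nat -> V) : (j < n)%N ->
  \sum_(s < n) ((s : nat) == j)%:R *: F s = F j.
Proof.
move=> jn; rewrite (bigD1 (Ordinal jn)) //= eqxx scale1r big1 ?addr0 //.
move=> i /negbTE ne; rewrite -[(_ == j)%N]/(i == Ordinal jn) ne scale0r //.
Qed.


Lemma pickr (k : fieldType) (n j : nat) (F : nat -> k) : (j < n)%N ->
  \sum_(s < n) ((s : nat) == j)%:R * F s = F j.
Proof.
move=> jn; rewrite (bigD1 (Ordinal jn)) //= eqxx mul1r big1 ?addr0 //.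
move=> i /negbTE ne; rewrite -[(_ == j)%N]/(i == Ordinal jn) ne mul0r //.
Qed.

Lemma tensZr (k : fieldType) (A : falgType k) (a b : A) (c : k) : tens a (c *: b) = c *: tens a b.
Proof. by apply/matrixP => i j; rewrite !mxE linearZ /= mulrCA. Qed.

Section Inner.
Variables (k : fieldType) (n : nat) (q : k).
Hypothesis pr : n.-primitive_root (q ^+ 2).
Variable (V : lmodType k).

Lemma L_inner (A : algType k) (E1 E2 : A) (e j : nat) : (j < n)%N ->
  \sum_(s < n) \sum_(t < n) Rcoef n q s t *: ((actH q (n - s) e *: E1) * (actHs q t j *: E2))
  = actH q (n - j) e *: (E1 * E2).
Proof.
move=> jn.
under eq_bigr do under eq_bigr do rewrite -scalerAl -scalerAr !scalerA.
under eq_bigr do rewrite -scaler_suml.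
rewrite -scaler_suml; congr (_ *: _).
rewrite -(pickr (fun s => actH q (n - s) e) jn); apply: eq_bigr => s _.
rewrite -(sumR_s pr (ltn_ord s) jn) mulr_suml; apply: eq_bigr => t _.
ring.
Qed.

Lemma L_quad (E : nat -> nat -> V) (e j v0 p : _) : (j < n)%N -> (v0 < n)%N ->
  (forall v, (v < n)%N -> (0 == v + e %[mod n])%N = (v == v0)) ->
  \sum_(s < n) \sum_(t < n) \sum_(u < n) \sum_(v < n)
     (Rcoef n q s t * Rcoef n q u v * (actHs q t j * actH q u e * p)) *: E s v
  = p *: E j v0.
Proof.
move=> jn v0n ind.
have H : forall s : 'I_n, \sum_(t < n) \sum_(u < n) \sum_(v < n)
     (Rcoef n q s t * Rcoef n q u v * (actHs q t j * actH q u e * p)) *: E s v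
   = (\sum_(t < n) Rcoef n q s t * actHs q t j) *:
       \sum_(v < n) (\sum_(u < n) Rcoef n q u v * actH q u e) *: (p *: E s v).
  move=> s; rewrite scaler_suml; apply: eq_bigr => t _.
  rewrite scaler_sumr exchange_big; apply: eq_bigr => v _.
  rewrite scaler_suml scaler_sumr; apply: eq_bigr => u _.
  by rewrite !scalerA; congr (_ *: _); ring.
rewrite (eq_bigr _ (fun s _ => H s)).
under eq_bigr do rewrite (sumR_s pr (ltn_ord _) jn).
rewrite (pick (fun s => \sum_(v < n) (\sum_(u < n) Rcoef n q u v * actH q u e) *: (p *: E s v)) jn).
under eq_bigr => v _ do rewrite (sumR_u pr) (ind v (ltn_ord v)).
by rewrite (pick (fun v => p *: E j v) v0n).
Qed.
Lemma L_tensH (A : falgType k) (E : nat -> A) (F : A) (e v0 : nat) : (v0 < n)%N ->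
  (forall v, (v < n)%N -> (0 == v + e %[mod n])%N = (v == v0)) ->
  \sum_(u < n) \sum_(v < n) Rcoef n q u v *: tens (E v) (actH q u e *: F) = tens (E v0) F.
Proof.
move=> v0n ind.
under eq_bigr do under eq_bigr do rewrite tensZr scalerA.
rewrite exchange_big /=.
under eq_bigr => v _ do rewrite -scaler_suml (sumR_u pr) (ind v (ltn_ord v)).
exact: (pick (fun v => tens (E v) F) v0n).
Qed.

Lemma L_tensHs (A : falgType k) (E : nat -> A) (F : A) (j : nat) : (j < n)%N ->
  \sum_(s < n) \sum_(t < n) Rcoef n q s t *: tens (E s) (actHs q t j *: F) = tens (E j) F.
Proof.
move=> jn.
under eq_bigr => s _ do under eq_bigr do rewrite tensZr scalerA.
under eq_bigr => s _ do rewrite -scaler_suml (sumR_s pr (ltn_ord s) jn).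
exact: (pick (fun s => tens (E s) F) jn).
Qed.
End Inner.

Section Mk.
Variables (k : fieldType) (A B : algType k) (f : A -> B).
Hypotheses (f0 : f 0 = 0) (fD : forall a b, f (a + b) = f a + f b)
  (fZ : forall c a, f (c *: a) = c *: f a)
  (f1 : f 1 = 1) (fM : forall a b, f (a * b) = f a * f b).
Definition mkf : A -> B := let _ := (f0, fD, fZ, f1, fM) in f.
HB.instance Definition _ := GRing.isNmodMorphism.Build A B mkf (conj f0 fD).
HB.instance Definition _ := GRing.isMonoidMorphism.Build A B mkf (f1, fM).
HB.instance Definition _ := GRing.isScalable.Build k A B *:%R mkf fZ.
End Mk.

Definition nf (k : fieldType) (B : algType k) (g x xs : B) (a b c : nat) : B :=
  xs ^+ a * g ^+ b * x ^+ c.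

Fixpoint al (k : fieldType) (q : k) (a : nat) : k :=
  if a is a'.+1 then (q ^- 2) ^+ a' * (- (q ^- 2 * (q - q^-1)^-1)) + al q a' else 0.
Fixpoint be (k : fieldType) (n : nat) (q : k) (a : nat) : k :=
  if a is a'.+1 then (q ^- 2) ^+ a' * (q ^- 2 * (q - q^-1)^-1) + be n q a' * (q ^+ 2) ^+ (n - 2)
  else 0.

Section Gen.
Variables (k : fieldType) (n : nat) (q : k) (B : algType k) (g x xs : B).
Hypothesis qn0 : q != 0.
Hypothesis rel : drin_relations n q g x xs.

Lemma gpow_xs e : g ^+ e * xs = (q ^+ 2) ^+ e *: (xs * g ^+ e).
Proof.
case: rel => _ [_ gxs _].
elim: e => [|e IH]; first by rewrite !expr0 mul1r mulr1 scale1r.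
rewrite exprSr -mulrA gxs -scalerAr [g ^+ e * (xs * g)]mulrA IH -scalerAl scalerA.
by rewrite [(q ^+ 2) ^+ e.+1]exprS mulrA.
Qed.

Lemma g_xs a : g * xs ^+ a = (q ^+ 2) ^+ a *: (xs ^+ a * g).
Proof.
case: rel => _ [_ gxs _].
elim: a => [|a IH]; first by rewrite !expr0 mul1r mulr1 scale1r.
rewrite exprSr mulrA IH -scalerAl -[xs ^+ a * g * xs]mulrA gxs -scalerAr scalerA [xs ^+ a * (xs * g)]mulrA.
by rewrite [(q ^+ 2) ^+ a.+1]exprSr.
Qed.

Lemma g_nf a b c : g * nf g x xs a b c = (q ^+ 2) ^+ a *: nf g x xs a b.+1 c.
Proof.
by rewrite /nf !mulrA g_xs -!scalerAl -(mulrA (xs ^+ a) g) -exprS.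
Qed.

Lemma xs_nf a b c : xs * nf g x xs a b c = nf g x xs a.+1 b c.
Proof. by rewrite /nf !mulrA -exprS. Qed.

Lemma x_g1 : x * g = q ^+ 2 *: (g * x).
Proof.
case: rel => _ [gx _ _].
by rewrite gx scalerA mulfV ?scale1r // expf_neq0.
Qed.

Lemma x_g b : x * g ^+ b = (q ^+ 2) ^+ b *: (g ^+ b * x).
Proof.
elim: b => [|b IH]; first by rewrite !expr0 mul1r mulr1 scale1r.
rewrite exprSr [x * (g ^+ b * g)]mulrA IH -scalerAl -[g ^+ b * x * g]mulrA x_g1.
by rewrite -scalerAr scalerA [g ^+ b * (g * x)]mulrA [(q ^+ 2) ^+ b.+1]exprSr.
Qed.

Lemma x_xs1 : x * xs = q ^- 2 *: (xs * x)
  + (al q 1 *: 1 + be n q 1 *: g ^+ (n - 2)).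
Proof.
case: rel => _ [_ _ cr].
have e : xs * x = q ^+ 2 *: (x * xs) + (q - q^-1)^-1 *: (1 - g ^+ (n - 2)).
  by rewrite -cr addrC subrK.
rewrite e scalerDr scalerA mulVf ?expf_neq0 // scale1r /=.
rewrite expr0 !mul1r mul0r !addr0 scalerA -addrA -[LHS]addr0; congr (_ + _).
by rewrite scalerBr scaleNr addrACA subrr addNr addr0.
Qed.
Lemma x_xs1' : x * xs = q ^- 2 *: (xs * x)
  + ((- (q ^- 2 * (q - q^-1)^-1)) *: 1 + (q ^- 2 * (q - q^-1)^-1) *: g ^+ (n - 2)).
Proof. by rewrite x_xs1 /= expr0 !mul1r mul0r !addr0. Qed.

Lemma x_xs a : x * xs ^+ a = (q ^- 2) ^+ a *: (xs ^+ a * x)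
  + xs ^+ a.-1 * (al q a *: 1 + be n q a *: g ^+ (n - 2)).
Proof.
elim: a => [|a IH].
  by rewrite /= !scale0r addr0 mulr0 addr0 expr0 scale1r mulr1 mul1r.
have t2 : xs ^+ a.-1 * (al q a *: 1 + be n q a *: g ^+ (n - 2)) * xs
    = xs ^+ a * (al q a *: 1 + (be n q a * (q ^+ 2) ^+ (n - 2)) *: g ^+ (n - 2)).
  case: a {IH} => [|a]; first by rewrite /= !mul0r !scale0r !addr0 !mulr0 !mul0r.
  rewrite [a.+1.-1]/= -mulrA mulrDl -!scalerAl mul1r gpow_xs scalerA.
  by rewrite [xs ^+ a.+1]exprSr -[RHS]mulrA [in RHS]mulrDr -!scalerAr mulr1.
rewrite [xs ^+ a.+1]exprSr mulrA IH mulrDl t2 -scalerAl -[xs ^+ a * x * xs]mulrA x_xs1'.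
rewrite [a.+1.-1]/= [al q a.+1]/= [be n q a.+1]/=.
rewrite mulrDr scalerDr -addrA; congr (_ + _).
  by rewrite -scalerAr scalerA mulrA [(q ^- 2) ^+ a.+1]exprSr.
rewrite scalerAr -mulrDr; congr (_ * _).
by rewrite scalerDr !scalerA addrACA -!scalerDl.
Qed.
Lemma x_nf a b c : x * nf g x xs a b c =
  ((q ^- 2) ^+ a * (q ^+ 2) ^+ b) *: nf g x xs a b c.+1
  + al q a *: nf g x xs a.-1 b c + be n q a *: nf g x xs a.-1 (n - 2 + b) c.
Proof.
rewrite /nf !mulrA x_xs !mulrDl -addrA; congr (_ + _).
  rewrite -!scalerAl -(mulrA _ x) x_g -scalerAr -scalerAl scalerA.
  by rewrite !mulrA -(mulrA _ x) -exprS.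
rewrite mulrDr !mulrDl -!scalerAr -!scalerAl mulr1.
by rewrite exprD !mulrA.
Qed.
Lemma nf_modb a b c : nf g x xs a b c = nf g x xs a (b %% n) c.
Proof.
case: rel => [[gn _ _] _].
by rewrite /nf {1}(divn_eq b n) exprD mulnC exprM gn expr1n mul1r.
Qed.

Lemma nf_a a b c : (n <= a)%N -> nf g x xs a b c = 0.
Proof.
case: rel => [[_ _ xsn] _] an.
by rewrite /nf -(subnK an) exprD xsn !mulr0 !mul0r.
Qed.

Lemma nf_c a b c : (n <= c)%N -> nf g x xs a b c = 0.
Proof.
case: rel => [[_ xn _] _] cn.
by rewrite /nf -(subnK cn) exprD xn !mulr0.
Qed.
End Gen.

Theorem lemma6p6 (k : fieldType) (n : nat) (q : k) (P : nat -> nat -> k)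
  (A : falgType k) (G X Xs : A) :
  (2 < n)%N -> n.-primitive_root (q ^+ 2) -> q != q^-1 ->
  hopf_pairing n q P -> P 1%N 1%N = (q - q^-1)^-1 ->
  braided_double n q P G X Xs ->
  [/\ delta_H n q G X 1 = tens (G ^+ (n - 1)) X + tens X 1,
      delta_Hs n q G Xs 1 = tens (G ^+ (n - 1)) Xs + tens Xs 1,
      drin_relations n q G X Xs
    & presented_by n q G X Xs].
Proof.
move=> n2 pr _ [hp0 [hp1 _ _ _ _]] P11 [[Gn Xn Xsn] [bas GX GXs cross]].
have n1 : (1 < n)%N by lia.
have n0 : (0 < n)%N by lia.
have qn0 : q != 0.
  by apply/eqP => q0; move: (r0 pr); rewrite q0 expr0n /= eqxx.
have rel : drin_relations n q G X Xs.
  split; first by split.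
  split.
  - by have := GX 1%N 1%N n1 n1; rewrite !expr1 /actH muln1 expr1.
  - by have := GXs 1%N 1%N n1 n1; rewrite !expr1 /actHs muln1 expr1.
  - have := cross 1%N 1%N n1 n1.
    rewrite /cross_lhs /cross_rhs !big_ord_recl !big_ord0 /= /bump /= !subn0 subnn !add0n !addn0.
    rewrite !mulr0 !addr0 !mul1r hp1 // hp0 // hp0 // /= !scale0r !add0r !addr0 !(L_inner pr) //.
    have v0n : (n.-1 < n)%N by lia.
    have I1 : forall v, (v < n)%N -> (0 == v + 1 %[mod n])%N = (v == n.-1) by move=> v; apply: ind1.
    have I0 : forall v, (v < n)%N -> (0 == v + 0 %[mod n])%N = (v == 0)%N by move=> v; apply: ind0.
    rewrite (L_quad pr (fun s v => G ^+ (n - s) * Xs ^+ 0 * X ^+ 0 * G ^+ v) _ n1 v0n I1).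
    rewrite (L_quad pr (fun s v => G ^+ (n - s) * Xs ^+ 1 * X ^+ 0 * G ^+ v) _ n0 v0n I1).
    rewrite (L_quad pr (fun s v => G ^+ (n - s) * Xs ^+ 1 * X ^+ 1 * G ^+ v) _ n0 n0 I0).
    rewrite (L_quad pr (fun s v => G ^+ (n - s) * Xs ^+ 0 * X ^+ 1 * G ^+ v) _ n1 n0 I0).
    rewrite !scale0r !scale1r !addr0 /actH !muln0 !expr0 !scale1r !mulr1 !expr1 ?mul1r subn0 ?Gn ?mulr1.
    have e1 : (q ^- 2) ^+ ((n - 1) * 1) = q ^+ 2.
      have ha : (q ^+ 2) ^+ (n - 1) != 0 by rewrite expf_neq0 // (r0 pr).
      have h : (q ^+ 2) ^+ (n - 1) * q ^+ 2 = 1 by rewrite -exprSr subn1 prednK // (prim_expr_order pr).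
      by rewrite muln1 exprVn -[RHS](mulKf ha) h mulr1.
    have e2 : G ^+ (n - 1) * G ^+ n.-1 = G ^+ (n - 2).
      by rewrite -exprD (_ : (n - 1 + n.-1 = n - 2 + n)%N) ?exprD ?Gn ?mulr1 //; lia.
    rewrite e1 e2 add0r mul1r -P11 => H.
    have -> : Xs * X = q ^+ 2 *: (X * Xs) + (P 1%N 1%N)%:A - P 1%N 1%N *: G ^+ (n - 2).
      by rewrite H [P _ _ *: _ + _]addrC addrK.
    rewrite scalerBr; set a := q ^+ 2 *: _; set b := _%:A; set c := P _ _ *: _.
    by rewrite addrAC [a + b - a]addrAC subrr add0r.
  have v0n : (n.-1 < n)%N by lia.
  have I1 : forall v, (v < n)%N -> (0 == v + 1 %[mod n])%N = (v == n.-1) by move=> v; apply: ind1.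
  have I0 : forall v, (v < n)%N -> (0 == v + 0 %[mod n])%N = (v == 0)%N by move=> v; apply: ind0.
split.
- rewrite /delta_H !big_ord_recl big_ord0 /= /bump /= subn0 subnn addr0.
  rewrite (L_tensH pr (fun v => X ^+ 0 * G ^+ v) _ v0n I1).
  rewrite (L_tensH pr (fun v => X ^+ 1 * G ^+ v) _ n0 I0).
  by rewrite /= !expr0 !mul1r !scale1r expr1 mulr1 subn1 mulr0 addr0 scale1r.
- rewrite /delta_Hs !big_ord_recl big_ord0 /= /bump /= subn0 subnn addr0.
  rewrite (L_tensHs pr (fun s => G ^+ (n - s) * Xs ^+ 1) _ n0).
  rewrite (L_tensHs pr (fun s => G ^+ (n - s) * Xs ^+ 0) _ n1).
  rewrite /= !expr0 !mulr1 !scale1r expr1 subn0 Gn mul1r addrC.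
  by rewrite mulr0 addr0 scale1r.
- exact: rel.
move=> B g x xs relB.

pose t0 : ('I_n * 'I_n * 'I_n)%type := (Ordinal n0, Ordinal n0, Ordinal n0).
pose e := pbw n G X Xs.
pose N := size e.
pose et := in_tuple e.
pose tt i := nth t0 (enum {: 'I_n * 'I_n * 'I_n}) i.
have Ee : forall i : 'I_N, et`_i = nf G X Xs (tt i).1.1 (tt i).1.2 (tt i).2.
  move=> i; rewrite /= /e /pbw (nth_map t0) //.
  have sz : size e = size (enum {: 'I_n * 'I_n * 'I_n}) by rewrite /e /pbw /image_mem size_map.
  by rewrite -sz; exact: ltn_ord i.
have basT : basis_of fullv et := bas.
have fre : free et := basis_free basT.
have expd : forall v, v = \sum_(i < N) coord et i v *: et`_i.
  by move=> v; apply: (coord_basis basT); rewrite memvf.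
pose f (v : A) : B := \sum_(i < N) coord et i v *: nf g x xs (tt i).1.1 (tt i).1.2 (tt i).2.
have f0 : f 0 = 0 by rewrite /f big1 // => i _; rewrite linear0 scale0r.
have fD : forall u v, f (u + v) = f u + f v.
  by move=> u v; rewrite /f -big_split; apply: eq_bigr => i _; rewrite linearD scalerDl.
have fZ : forall (c : k) v, f (c *: v) = c *: f v.
  by move=> c v; rewrite /f scaler_sumr; apply: eq_bigr => i _; rewrite linearZ scalerA.
have fe : forall i : 'I_N, f et`_i = nf g x xs (tt i).1.1 (tt i).1.2 (tt i).2.
  move=> i; rewrite /f (bigD1 i) //= coord_free // eqxx scale1r big1 ?addr0 //.
  by move=> j ne; rewrite coord_free // eq_sym (negbTE ne) scale0r.
have fnf : forall a b c, f (nf G X Xs a b c) = nf g x xs a b c.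
  move=> a b c.
  case: (ltnP a n) => an; last by rewrite (nf_a rel) // (nf_a relB).
  case: (ltnP c n) => cn; last by rewrite (nf_c rel) // (nf_c relB).
  rewrite (nf_modb rel) (nf_modb relB).
  pose t : ('I_n * 'I_n * 'I_n)%type := (Ordinal an, Ordinal (ltn_pmod b n0), Ordinal cn).
  have ti : (index t (enum {: 'I_n * 'I_n * 'I_n}) < N)%N by rewrite /N /e /pbw size_map index_mem mem_enum.
  by have := fe (Ordinal ti); rewrite Ee /tt /= nth_index ?mem_enum.
have fsum := big_morph f fD f0.
have f1 : f 1 = 1 by move: (fnf 0%N 0%N 0%N); rewrite /nf !expr0 ?mulr1 ?mul1r.
have fG : f G = g by move: (fnf 0%N 1%N 0%N); rewrite /nf !expr0 ?mul1r ?mulr1 ?expr1.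
have fX : f X = x by move: (fnf 0%N 0%N 1%N); rewrite /nf !expr0 ?mul1r ?mulr1 ?expr1.
have fXs : f Xs = xs by move: (fnf 1%N 0%N 0%N); rewrite /nf !expr0 ?mul1r ?mulr1 ?expr1.
have Sext : forall a, (forall a' b' c', f (a * nf G X Xs a' b' c') = f a * nf g x xs a' b' c') ->
    forall v, f (a * v) = f a * f v.
  move=> a H v; rewrite (expd v) mulr_sumr !fsum mulr_sumr; apply: eq_bigr => i _.
  by rewrite -scalerAr !fZ Ee H fnf scalerAr.
have S1 : forall v, f (1 * v) = f 1 * f v by move=> v; rewrite f1 !mul1r.
have Smul : forall a b, (forall v, f (a * v) = f a * f v) -> (forall v, f (b * v) = f b * f v) ->
    forall v, f (a * b * v) = f (a * b) * f v.
  by move=> a b Sa Sb v; rewrite -mulrA Sa Sb Sa mulrA.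
have Sexp : forall a m, (forall v, f (a * v) = f a * f v) -> forall v, f (a ^+ m * v) = f (a ^+ m) * f v.
  move=> a m Sa; elim: m => [|m IH]; first by rewrite expr0.
  by rewrite exprS; apply: (Smul).
have SG : forall v, f (G * v) = f G * f v.
  apply: Sext => a b c; rewrite (g_nf rel) fZ fnf fG (g_nf relB) //.
have SXs : forall v, f (Xs * v) = f Xs * f v.
  apply: Sext => a b c; rewrite xs_nf fnf fXs xs_nf //.
have SX : forall v, f (X * v) = f X * f v.
  apply: Sext => a b c; rewrite (x_nf qn0 rel) !fD !fZ !fnf fX (x_nf qn0 relB) //.
have fM : forall u v, f (u * v) = f u * f v.
  move=> u v; rewrite (expd u) mulr_suml !fsum mulr_suml; apply: eq_bigr => i _.
  rewrite -scalerAl !fZ Ee -scalerAl; congr (_ *: _).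
  rewrite /nf; apply: (Smul); last exact: (Sexp).
  by apply: (Smul); apply: (Sexp).
split.
  exists (@mkf k A B f f0 fD fZ f1 fM); split.
  - exact: fG.
  - exact: fX.
  - exact: fXs.
move=> h1 h2 hG hX hXs v.
rewrite (expd v) !raddf_sum; apply: eq_bigr => i _.
transitivity (coord et i v *: h1 et`_i); first exact: linearZ_LR.
transitivity (coord et i v *: h2 et`_i); last by symmetry; exact: linearZ_LR.
rewrite Ee /nf !rmorphM !rmorphXn; congr (_ *: (_ ^+ _ * _ ^+ _ * _ ^+ _)); [exact: hXs | exact: hG | exact: hX].
Qed.
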